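(* Let $K$ be a field and $\mathcal A$ an algebraic division algebra over $K$ (e.g. an algebraic field extension of $K$), regarded as a left $\mathcal A$-module via left multiplication. Let $J$ be a $K$-subspace of $\mathcal A$ and fix any choice of $\vartheta$. (i) If $J=0$ or $J=\mathcal A$, then $\sigma_\vartheta(J)=\tau_\vartheta(J)=\mathcal A$. (ii) If $J$ is nonzero and proper, then $\sigma_\vartheta(J)=\{0\}$ and $\tau_\vartheta(J)=(\mathcal A\setminus J)\cup\{0\}$.
   Context: For an associative unital algebra $\mathcal A$ over a commutative ring (here a field $K$), the symbol $\vartheta$ ranges over ''left'', ''right'', ''pre-two-sided'', ''two-sided''. A subspace $J\subseteq\mathcal A$ is a left (resp. right; two-sided) Mathieu subspace of $\mathcal A$ if whenever $a\in\mathcal A$ satisfies $a^m\in J$ for all $m\ge1$, then for all $b,c\in\mathcal A$ there is $N_0$ with $ba^m\in J$ (resp. $a^mc\in J$; $ba^mc\in J$) for all $m\ge N_0$; pre-two-sided means both left and right. A $\vartheta$-ideal means a left/right/two-sided ideal accordingly, and a two-sided ideal for $\vartheta$ = pre-two-sided. For a left $\mathcal A$-module $\mathcal M$, $u\in\mathcal M$, $N\subseteq \mathcal M$, $(N:u)=\{a\in\mathcal A: au\in N\}$; for a subspace $N$, $\sigma_\vartheta(N)=\{u\in\mathcal M: (N:u)\text{ is a }\vartheta\text{-ideal of }\mathcal A\}$, $\tau_\vartheta(N)=\{u\in\mathcal M: (N:u)\text{ is a }\vartheta\text{-Mathieu subspace of }\mathcal A\}$. A $K$-algebra is algebraic if every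 element satisfies a nonzero polynomial over $K$. *)

(* Defs.v *)
From HB Require Import structures.
From mathcomp Require Import all_boot all_order all_algebra.
Set Implicit Arguments. Unset Strict Implicit. Unset Printing Implicit Defensive.
Import GRing.Theory.
Local Open Scope ring_scope.

Inductive theta := Left | Right | PreTwoSided | TwoSided.

Section Defs.
Variables (K : fieldType) (A : unitAlgType K).

Definition is_subspace (J : A -> Prop) : Prop :=
  J 0 /\ (forall x y, J x -> J y -> J (x + y)) /\ (forall (c : K) x, J x -> J (c *: x)).

Definition algebraic_alg : Prop :=
  forall a : A, exists p : {poly K}, p != 0 /\ horner_alg a p = 0.

(* division algebra: every nonzero element invertible (1 != 0 is built in) *)
Definition division_alg : Prop := forall a : A, a != 0 -> a \is a GRing.unit.

Definition left_ideal (I : A -> Prop) : Prop :=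
  is_subspace I /\ forall b x, I x -> I (b * x).
Definition right_ideal (I : A -> Prop) : Prop :=
  is_subspace I /\ forall c x, I x -> I (x * c).
Definition twosided_ideal (I : A -> Prop) : Prop :=
  is_subspace I /\ forall b c x, I x -> I (b * x * c).

Definition theta_ideal (th : theta) (I : A -> Prop) : Prop :=
  match th with
  | Left => left_ideal I
  | Right => right_ideal I
  | PreTwoSided | TwoSided => twosided_ideal I
  end.

Definition powers_in (J : A -> Prop) (a : A) : Prop := forall m : nat, (1 <= m)%N -> J (a ^+ m).

Definition left_MS (J : A -> Prop) : Prop :=
  is_subspace J /\ forall a, powers_in J a ->
    forall b, exists N0 : nat, forall m : nat, (N0 <= m)%N -> J (b * a ^+ m).
Definition right_MS (J : A -> Prop) : Prop :=
  is_subspace J /\ forall a, powers_in J a ->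
    forall c, exists N0 : nat, forall m : nat, (N0 <= m)%N -> J (a ^+ m * c).
Definition twosided_MS (J : A -> Prop) : Prop :=
  is_subspace J /\ forall a, powers_in J a ->
    forall b c, exists N0 : nat, forall m : nat, (N0 <= m)%N -> J (b * a ^+ m * c).

Definition theta_MS (th : theta) (J : A -> Prop) : Prop :=
  match th with
  | Left => left_MS J
  | Right => right_MS J
  | PreTwoSided => left_MS J /\ right_MS J
  | TwoSided => twosided_MS J
  end.

(* (N : u) for the left regular module A *)
Definition colon (N : A -> Prop) (u : A) : A -> Prop := fun a => N (a * u).

Definition sigma_th (th : theta) (N : A -> Prop) (u : A) : Prop :=
  theta_ideal th (colon N u).
Definition tau_th (th : theta) (N : A -> Prop) (u : A) : Prop :=
  theta_MS th (colon N u).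
End Defs.

(* Main.v *)
Require Import Defs.
From HB Require Import structures.
From mathcomp Require Import all_boot all_order all_algebra.
Import GRing.Theory.
Local Open Scope ring_scope.

Section Aux.
Variables (K : fieldType) (A : unitAlgType K).

Lemma sub_neg (I : A -> Prop) (hI : is_subspace I) x : I x -> I (- x).
Proof.
case: hI => _ [_ hZ] Ix. rewrite -scaleN1r. exact: hZ.
Qed.

Lemma alg_one (hdiv : division_alg A) (halg : algebraic_alg A)
  (I : A -> Prop) (hI : is_subspace I) (a : A) :
  a != 0 -> powers_in I a -> I 1.
Proof.
move=> a0 Hp. have aU : a \is a GRing.unit := hdiv _ a0.
case: (hI) => I0 [ID IZ].
have Hn : forall p : {poly K}, forall n, (1 <= n)%N -> I (horner_alg a p * a ^+ n).
  elim/poly_ind => [|p c IH] n n1; first by rewrite rmorph0 mul0r.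
  rewrite rmorphD rmorphM /= horner_algX horner_algC mulrDl -mulrA -exprS.
  apply: ID; first exact: IH.
  rewrite -scalerAl mul1r. apply: IZ. exact: Hp.
case: (halg a) => p [p0 pa].
elim/poly_ind: p p0 pa => [|p c IH] p0 pa; first by rewrite eqxx in p0.
have [c0|c0] := eqVneq c 0.
  move: p0 pa; rewrite c0 addr0 => p0.
  rewrite rmorphM /= horner_algX => pa.
  apply: IH.
    by apply: contraNneq p0 => ->; rewrite mul0r.
  by rewrite -(mulrK aU (horner_alg a p)) pa mul0r.
move: pa; rewrite rmorphD rmorphM /= horner_algX horner_algC => /eqP.
rewrite addr_eq0 => /eqP hc.
have : I (c%:A) by rewrite -[c%:A]opprK -hc; apply: sub_neg => //; have := Hn p 1%N (leqnn 1); rewrite expr1.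
move=> /(IZ c^-1). by rewrite scalerA mulVf // scale1r.
Qed.

Lemma ideal_all (I : A -> Prop) (hI : is_subspace I)
  (hc : forall b c x, I x -> I (b * x * c)) th :
  theta_ideal th I /\ theta_MS th I.
Proof.
have L : left_MS I.
  split=> // a Ha b; exists 1%N => m m1.
  by rewrite -(mulr1 (b * a ^+ m)); apply: hc; apply: Ha.
have R : right_MS I.
  split=> // a Ha c; exists 1%N => m m1.
  by rewrite -(mul1r (a ^+ m)); apply: hc; apply: Ha.
have T : twosided_MS I.
  split=> // a Ha b c; exists 1%N => m m1.
  by apply: hc; apply: Ha.
case: th => /=; (split; [|by []]); split=> //.
- by move=> b x Ix; rewrite -(mulr1 (b * x)); apply: hc.
- by move=> c x Ix; rewrite -(mul1r x); apply: hc.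
all: try by move=> b c x Ix; apply: hc.
Qed.

Lemma ideal_full (hdiv : division_alg A) (I : A -> Prop) th :
  theta_ideal th I -> forall x, I x -> x != 0 -> forall y, I y.
Proof.
move=> hI x Ix x0 y. have xU : x \is a GRing.unit := hdiv _ x0.
case: th hI => /= [[_ h]|[_ h]|[_ h]|[_ h]].
- by rewrite -[y]mulr1 -(mulVr xU) mulrA; apply: h.
- by rewrite -[y]mul1r -(mulrV xU) -mulrA; apply: h.
- by rewrite -[y]mul1r -(mulVr xU); apply: h.
- by rewrite -[y]mul1r -(mulVr xU); apply: h.
Qed.

Lemma ms_full (I : A -> Prop) th :
  theta_MS th I -> I 1 -> forall y, I y.
Proof.
move=> hI I1 y.
have P1 : powers_in I 1 by move=> m _; rewrite expr1n.
case: th hI => /= [[_ h]|[_ h]|[[_ h] _]|[_ h]].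
- by case: (h 1 P1 y) => N hN; move: (hN N (leqnn N)); rewrite expr1n mulr1.
- by case: (h 1 P1 y) => N hN; move: (hN N (leqnn N)); rewrite expr1n mul1r.
- by case: (h 1 P1 y) => N hN; move: (hN N (leqnn N)); rewrite expr1n mulr1.
- by case: (h 1 P1 y 1) => N hN; move: (hN N (leqnn N)); rewrite expr1n mulr1 mulr1.
Qed.

Lemma ms_no1 (hdiv : division_alg A) (halg : algebraic_alg A)
  (I : A -> Prop) (hI : is_subspace I) th : ~ I 1 -> theta_MS th I.
Proof.
move=> n1.
have a0 : forall a, powers_in I a -> a = 0.
  move=> a Ha; case: (eqVneq a 0) => // a0; exfalso; apply: n1.
  exact: (alg_one hdiv halg I hI a a0 Ha).
have I0 : I 0 by case: hI.
have L : left_MS I.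
  split=> // a Ha b; exists 1%N => m m1.
  by rewrite (a0 a Ha) expr0n eqn0Ngt m1 mulr0.
have R : right_MS I.
  split=> // a Ha c; exists 1%N => m m1.
  by rewrite (a0 a Ha) expr0n eqn0Ngt m1 mul0r.
have T : twosided_MS I.
  split=> // a Ha b c; exists 1%N => m m1.
  by rewrite (a0 a Ha) expr0n eqn0Ngt m1 mulr0 mul0r.
by case: th.
Qed.

Lemma colon_sub (J : A -> Prop) (hJ : is_subspace J) u : is_subspace (colon J u).
Proof.
case: hJ => J0 [JD JZ]; rewrite /colon; split; first by rewrite mul0r.
split; first by move=> x y Jx Jy; rewrite mulrDl; apply: JD.
by move=> c x Jx; rewrite -scalerAl; apply: JZ.
Qed.

End Aux.
Arguments ideal_all {K A}.
Arguments ideal_full {K A}.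
Arguments ms_full {K A}.
Arguments ms_no1 {K A}.
Arguments colon_sub {K A}.

Theorem corollary4p6 (K : fieldType) (A : unitAlgType K)
  (hdiv : division_alg A) (halg : algebraic_alg A)
  (J : A -> Prop) (hJ : is_subspace J) (th : theta) :
  (((forall a, J a <-> a = 0) \/ (forall a, J a)) ->
     forall u : A, sigma_th th J u /\ tau_th th J u)
  /\
  ((exists a, J a /\ a <> 0) -> (exists a, ~ J a) ->
     forall u : A, (sigma_th th J u <-> u = 0) /\ (tau_th th J u <-> (~ J u \/ u = 0))).
Proof.
have CS := colon_sub J hJ.
have full : forall u, (forall x, colon J u x) -> sigma_th th J u /\ tau_th th J u.
  by move=> u h; apply: ideal_all; [exact: CS | move=> *; exact: h].
split.
  case=> [HJ|HJ] u; last by apply: full => x; exact: HJ.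
  have [->|u0] := eqVneq u 0.
    by apply: full => x; rewrite /colon mulr0; apply/HJ.
  have uU : u \is a GRing.unit := hdiv _ u0.
  apply: ideal_all; first exact: CS.
  move=> b c x; rewrite /colon => /HJ xu; apply/HJ.
  have -> : x = 0 by rewrite -(mulrK uU x) xu mul0r.
  by rewrite mulr0 mul0r mul0r.
move=> [j [Jj j0]] [k nk] u.
have [->|u0] := eqVneq u 0.
  have [h1 h2] : sigma_th th J 0 /\ tau_th th J 0.
    by apply: full => x; rewrite /colon mulr0; case: hJ.
  by split; split=> // _; right.
have uU : u \is a GRing.unit := hdiv _ u0.
have nfull : ~ (forall y, colon J u y).
  by move=> h; apply: nk; move: (h (k / u)); rewrite /colon mulrVK.
split.
  split; last by move=> u0'; rewrite u0' eqxx in u0.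
  move=> hs; exfalso; apply: nfull.
  apply: (ideal_full hdiv _ _ hs (j / u)); first by rewrite /colon mulrVK.
  by apply/eqP => h; apply: j0; rewrite -(mulrVK uU j) h mul0r.
split.
  move=> ht; left => Ju; apply: nfull; apply: (ms_full _ _ ht).
  by rewrite /colon mul1r.
case; last by move=> u0'; rewrite u0' eqxx in u0.
move=> nJ; apply: (ms_no1 hdiv halg _ (CS u)).
by rewrite /colon mul1r.
Qed.
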